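(* Let $\mathbb{X}$ be a $0$-dimensional Polish space and $\mathbb{A}\subseteq\mathbb{X}\times\mathbb{X}$. The following are equivalent: (a) for every $0$-dimensional Polish space $X$ and every relation $A\subseteq X\times X$, if there is no continuous map $c:X\to\omega$ with $c(x)\neq c(y)$ for all $(x,y)\in A$, then there is a continuous $f:\mathbb{X}\to X$ with $(f(x),f(y))\in A$ for all $(x,y)\in\mathbb{A}$; (b) there is a family $(C^\varepsilon_i)_{(\varepsilon,i)\in2\times\omega}$ of pairwise disjoint clopen subsets of $\mathbb{X}$ such that $\mathbb{A}\subseteq\bigcup_{i\in\omega}C^0_i\times C^1_i$.
   Context: $\omega$ carries the discrete topology. *)

(* Defs.v *)
From mathcomp Require Import all_boot all_order all_algebra.
From mathcomp Require Import all_classical all_reals all_analysis.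
From Stdlib Require Reals.

Set Implicit Arguments.
Unset Strict Implicit.
Unset Printing Implicit Defensive.

Local Open Scope classical_set_scope.

Notation Real := Stdlib.Reals.Rdefinitions.R.
Notation R0 := Stdlib.Reals.Rdefinitions.R0.
Notation Rlt := Stdlib.Reals.Rdefinitions.Rlt.
Notation Rle := Stdlib.Reals.Rdefinitions.Rle.
Notation Rplus := Stdlib.Reals.Rdefinitions.Rplus.

Definition is_metric (T : Type) (d : T -> T -> Real) : Prop :=
  [/\ (forall x y, Rle R0 (d x y)),
      (forall x y, d x y = R0 <-> x = y),
      (forall x y, d x y = d y x) &
      (forall x y z, Rle (d x z) (Rplus (d x y) (d y z)))].

Definition metric_induces_topology (T : topologicalType) (d : T -> T -> Real)
  : Prop :=
  forall U : set T, open U <->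
    (forall x, U x -> exists e, Rlt R0 e /\ (forall y, Rlt (d x y) e -> U y)).

Definition metric_complete (T : Type) (d : T -> T -> Real) : Prop :=
  forall u : nat -> T,
    (forall e, Rlt R0 e -> exists N, forall m n, (N <= m)%N -> (N <= n)%N ->
        Rlt (d (u m) (u n)) e) ->
    exists l, forall e, Rlt R0 e -> exists N, forall n, (N <= n)%N ->
        Rlt (d (u n) l) e.

Definition separable_space (T : topologicalType) : Prop :=
  exists D : set T, countable D /\ dense D.

Definition polish_space (T : topologicalType) : Prop :=
  separable_space T /\
  exists d : T -> T -> Real,
    [/\ is_metric d, metric_induces_topology d & metric_complete d].

Definition zero_dim (T : topologicalType) : Prop :=
  forall (U : set T) (x : T), open U -> U x ->
    exists V : set T, [/\ clopen V, V x & V `<=` U].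

(* Main.v *)
Require Import Defs.
From mathcomp Require Import all_boot all_order all_algebra.
From mathcomp Require Import all_classical all_reals all_analysis.
From HB Require Import structures.
From mathcomp Require Import zify.
From Stdlib Require Import Rdefinitions Raxioms RIneq Rbasic_fun Lra Lia.
Local Open Scope classical_set_scope.

Definition h (n : nat) : Rdefinitions.R := match n with 0 => R0 | S m => Rinv (INR (S m)) end.
Definition Tsp := nat.
HB.instance Definition _ := Choice.on Tsp.
Definition dsp (a b : Tsp) : Rdefinitions.R := if a == b then R0 else Rmax (h a) (h b).
Definition opsp (U : set Tsp) := forall x, U x -> exists e, Rlt R0 e /\ forall y, Rlt (dsp x y) e -> U y.

Lemma opspT : opsp setT.
Proof. by move=> x _; exists R1; split => //; apply: Rlt_0_1. Qed.

Lemma opspI : setI_closed opsp.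
Proof.
move=> A B hA hB x [Ax Bx].
have [e1 [e1p H1]] := hA x Ax; have [e2 [e2p H2]] := hB x Bx.
exists (Rmin e1 e2); split; first by apply: Rmin_glb_lt.
move=> y hy; split; [apply: H1|apply: H2]; apply: (Rlt_le_trans _ _ _ hy);
 [apply: Rmin_l|apply: Rmin_r].
Qed.

Lemma opsp_bigU (I : Type) (f : I -> set Tsp) : (forall i, opsp (f i)) -> opsp (\bigcup_i f i).
Proof.
move=> hf x [i _ fxi]; have [e [ep He]] := hf i x fxi.
by exists e; split => // y /He fy; exists i.
Qed.

HB.instance Definition _ := isOpenTopological.Build Tsp opspT opspI opsp_bigU.

Lemma open_Tsp (U : set Tsp) : open U = opsp U.
Proof. by []. Qed.

Lemma h_ge0 n : Rle R0 (h n).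
Proof. case: n => [|m]; first by apply: Rle_refl.
by apply: Rlt_le; apply: Rinv_0_lt_compat; apply: lt_0_INR; lia. Qed.

Lemma h_pos m : Rlt R0 (h m.+1).
Proof. by apply: Rinv_0_lt_compat; apply: lt_0_INR; lia. Qed.

Lemma dsp_ultra x y z : Rle (dsp x z) (Rmax (dsp x y) (dsp y z)).
Proof.
have := h_ge0 x; have := h_ge0 y; have := h_ge0 z.
rewrite /dsp; do 3 case: eqP => ?; subst => //=; rewrite ?eqxx;
  unfold Rmax; repeat destruct Rle_dec; try lra.
Qed.

Lemma dsp_neq x y : x <> y -> dsp x y = Rmax (h x) (h y).
Proof. by rewrite /dsp; case: eqP. Qed.

Lemma dsp_xx x : dsp x x = R0.
Proof. by rewrite /dsp eqxx. Qed.

Lemma dsp0 x : Rle (dsp x 0%N) (h x).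
Proof. rewrite /dsp; case: eqP => _; have := h_ge0 x; simpl h;
  unfold Rmax; repeat destruct Rle_dec; lra. Qed.

Lemma dsp_is_metric : is_metric dsp.
Proof.
split.
- move=> x y; have := h_ge0 x; have := h_ge0 y; rewrite /dsp; case: eqP => _;
  unfold Rmax; repeat destruct Rle_dec; lra.
- move=> x y; split; last by move=> ->; exact: dsp_xx.
  rewrite /dsp; case: eqP => // xy.
  case: x xy => [|x] xy; case: y xy => [|y] xy //.
  + have := h_pos y; simpl h; unfold Rmax; repeat destruct Rle_dec; lra.
  + have := h_pos x; simpl h; unfold Rmax; repeat destruct Rle_dec; lra.
  + have := h_pos x; have := h_pos y; unfold Rmax; repeat destruct Rle_dec; lra.
- move=> x y; rewrite /dsp eq_sym; case: eqP => // _; exact: Rmax_comm.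
- move=> x y z; have := dsp_ultra x y z.
  have : Rle R0 (dsp x y) by have := h_ge0 x; have := h_ge0 y; rewrite /dsp; case: eqP => _;
  unfold Rmax; repeat destruct Rle_dec; lra.
  have : Rle R0 (dsp y z) by have := h_ge0 y; have := h_ge0 z; rewrite /dsp; case: eqP => _;
  unfold Rmax; repeat destruct Rle_dec; lra.
  unfold Rmax; repeat destruct Rle_dec; lra.
Qed.

Lemma dsp_complete : metric_complete dsp.
Proof.
move=> u Hc.
case: (EM (exists N, forall n, (N <= n)%N -> u n = u N)) => [[N HN]|Hne].
  exists (u N) => e ep; exists N => n /HN ->; by rewrite dsp_xx.
exists 0%N => e ep; have [N HN] := Hc e ep; exists N => n Nn.
have [m [nm um]] : exists m, (n <= m)%N /\ u m <> u n.
  apply: contrapT => H; apply: Hne; exists n => m nm; apply: contrapT => hh; apply: H; by exists m.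
have := HN n m Nn (leq_trans Nn nm); rewrite dsp_neq; last by move=> e'; apply: um.
have := dsp0 (u n); unfold Rmax; repeat destruct Rle_dec; lra.
Qed.

Definition bsp (x : Tsp) (e : Rdefinitions.R) : set Tsp := [set y | Rlt (dsp x y) e].

Lemma dsp_ge0 x y : Rle R0 (dsp x y).
Proof. by case: dsp_is_metric. Qed.

Lemma dsp_sym x y : dsp x y = dsp y x.
Proof. by case: dsp_is_metric. Qed.

Lemma bsp_clopen x e : Rlt R0 e -> clopen (bsp x e).
Proof.
move=> ep; split.
- rewrite open_Tsp => y; rewrite /bsp /= => hy; exists e; split => // z hz.
  have := dsp_ultra x y z; unfold Rmax; repeat destruct Rle_dec; lra.
- rewrite -openC open_Tsp => y; rewrite /bsp /= => hy; exists e; split => // z hz hxz.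
  apply: hy; have := dsp_ultra x z y; rewrite (dsp_sym z y).
  unfold Rmax; repeat destruct Rle_dec; lra.
Qed.

Lemma bsp_center x e : Rlt R0 e -> bsp x e x.
Proof. by rewrite /bsp /= dsp_xx. Qed.

Lemma Tsp_zero_dim : zero_dim Tsp.
Proof.
move=> U x; rewrite open_Tsp => /[apply] -[e [ep He]].
by exists (bsp x e); split; [exact: bsp_clopen|exact: bsp_center|].
Qed.

Lemma Tsp_polish : polish_space Tsp.
Proof.
split.
  exists setT; split.
    by apply/countable_injP; exists id => a b _ _.
  by move=> O [x Ox] _; exists x.
by exists dsp; split; [exact: dsp_is_metric| |exact: dsp_complete].
Qed.

Lemma h_small (e : Rdefinitions.R) : Rlt R0 e -> exists N, forall n, (N <= n)%N -> Rlt (h n.+1) e.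
Proof.
move=> ep; have [N HN] := INR_unbounded (Rinv e); exists N => n Nn.
have hle : Rle (INR N) (INR n.+1) by apply: le_INR; apply/leP; apply: leq_trans Nn _.
have ie : Rlt R0 (Rinv e) by apply: Rinv_0_lt_compat.
rewrite /h -[e]Rinv_inv; apply: Rinv_lt_contravar.
  apply: Rmult_lt_0_compat => //; lra.
lra.
Qed.

Definition Asp : set (Tsp * Tsp) := fun p => exists i, p.1 = (2 * i).+1 /\ p.2 = (2 * i).+2.

Lemma dsp_0S n : dsp 0%N n.+1 = h n.+1.
Proof. rewrite dsp_neq //; have := h_pos n; simpl h; unfold Rmax; repeat destruct Rle_dec; lra. Qed.

Lemma Asp_nocol : ~ (exists c : Tsp -> nat, continuous c /\ (forall x y, Asp (x, y) -> c x <> c y)).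
Proof.
move=> [c [cc hc]].
have := (continuousP c).1 cc [set c 0%N] (discrete_open _).
rewrite open_Tsp => /(_ 0%N erefl) -[e [ep He]].
have [N HN] := h_small _ ep.
have e1 : c (2 * N).+1 = c 0%N.
  apply: He; rewrite dsp_0S; apply: HN; lia.
have e2 : c (2 * N).+2 = c 0%N.
  apply: He; rewrite dsp_0S; apply: HN; lia.
apply: (hc (2 * N).+1 (2 * N).+2); first by exists N.
by rewrite e1 e2.
Qed.

Lemma bsp_single n : bsp n.+1 (h n.+1) = [set n.+1].
Proof.
rewrite /bsp; apply/seteqP; split => y.
  move=> hy; have hy' : Rlt (dsp n.+1 y) (h n.+1) := hy.
  apply: contrapT => ny; move: hy'; rewrite dsp_neq; last by move=> e; apply: ny.
  move=> hy2; unfold Rmax in hy2; repeat destruct Rle_dec; lra.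
move=> ->; change (Rlt (dsp n.+1 n.+1) (h n.+1)); rewrite dsp_xx; apply: h_pos.
Qed.

Lemma single_clopen n : clopen [set (n.+1 : Tsp)].
Proof. rewrite -bsp_single; apply: bsp_clopen; apply: h_pos. Qed.

Lemma dir_ab (XX : topologicalType) (AA : set (XX * XX)) :
  (forall (X : topologicalType) (A : set (X * X)),
       polish_space X -> zero_dim X ->
       ~ (exists c : X -> nat, continuous c /\
            (forall x y, A (x, y) -> c x <> c y)) ->
       exists f : XX -> X, continuous f /\
            (forall x y, AA (x, y) -> A (f x, f y))) ->
   (exists C : bool -> nat -> set XX,
       (forall e i, clopen (C e i)) /\
       (forall e i e' j, (e, i) <> (e', j) -> C e i `&` C e' j = set0) /\
       AA `<=` \bigcup_(i in [set: nat]) (C false i `*` C true i)).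
Proof.
move=> Ha.
have [f [fc fh]] := Ha Tsp Asp Tsp_polish Tsp_zero_dim Asp_nocol.
exists (fun e i => f @^-1` [set ((2 * i + e).+1 : Tsp)]).
split; [|split].
- move=> e i; have [Ho Hc] := single_clopen (2 * i + e); split.
    exact: (continuousP f).1 fc _ Ho.
  exact: (continuous_closedP f).1 fc _ Hc.
- move=> e i e' j neq; apply/seteqP; split => // x [/= h1 h2].
  apply: neq; move: h1; rewrite h2 => -[] h3; clear h2.
  by case: e e' h3 => -[] /= h3; congr pair; lia.
- move=> [x y] /fh [i [h1 h2]]; exists i => //; split => /=.
    by move: h1 => /= ->; rewrite addn0.
  by move: h2 => /= ->; rewrite addn1.
Qed.

Lemma bigsetU_mem (T : Type) (F : nat -> set T) (s : seq nat) x :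
  (\big[setU/set0]_(i <- s) F i) x <-> exists i, i \in s /\ F i x.
Proof.
elim: s => [|a s IH]; rewrite ?big_nil ?big_cons.
  by split => // -[i []].
split.
  case => [Fa|/IH [i [si Fi]]]; first by exists a; rewrite inE eqxx.
  by exists i; rewrite inE si orbT.
move=> [i []]; rewrite inE => /orP [/eqP -> Fa|si Fi]; first by left.
by right; apply/IH; exists i.
Qed.

Lemma ball_open (X : topologicalType) (d : X -> X -> Rdefinitions.R) z e :
  is_metric d -> metric_induces_topology d -> open [set y | Rlt (d z y) e].
Proof.
move=> [d0 dE ds dt] mt; apply/(mt _).2 => y hy.
exists (Rminus e (d z y)); split; first by have : Rlt (d z y) e := hy; lra.
move=> w hw; change (Rlt (d z w) e); have := dt z y w; have : Rlt (d z y) e := hy.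
lra.
Qed.

Lemma key (X : topologicalType) (A : set (X * X)) (d : X -> X -> Rdefinitions.R) :
  separable_space X -> zero_dim X -> is_metric d -> metric_induces_topology d ->
  ~ (exists c : X -> nat, continuous c /\ (forall x y, A (x, y) -> c x <> c y)) ->
  exists z, forall e, Rlt R0 e ->
    exists x y, A (x, y) /\ Rlt (d z x) e /\ Rlt (d z y) e.
Proof.
move=> [D [Dc Dd]] zd dm mt Hnc.
have dm' := dm; case: dm' => [d0 dE ds dt].
apply: contrapT => Hz; apply: Hnc.
have Hz' : forall z, exists e, Rlt R0 e /\
    forall x y, A (x, y) -> Rlt (d z x) e -> Rlt (d z y) e -> False.
  move=> z; apply: contrapT => H1; apply: Hz; exists z => e ep; apply: contrapT => H2.
  apply: H1; exists e; split => // x y Axy h1 h2; apply: H2; by exists x, y.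
have [g gi] := (elimT (countable_injP D)) Dc.
pose indep (W : set X) := forall x y, A (x, y) -> W x -> W y -> False.
pose bl q (k : nat) := [set y | Rlt (d q y) (h k.+1)].
pose Pm (mk : nat * nat) := exists q, [/\ D q, g q = mk.1 &
   exists W0, [/\ clopen W0, indep W0 & bl q mk.2 `<=` W0]].
have W'ex : forall mk : nat * nat, exists W : set X, [/\ clopen W, indep W &
   (Pm mk -> exists q, [/\ D q, g q = mk.1 & bl q mk.2 `<=` W])].
  move=> mk; case: (EM (Pm mk)) => [[q [Dq gq [W0 [c0 i0 s0]]]] | nP].
    by exists W0; split => // _; exists q.
  exists set0; split => //; first by split; [exact: open0|exact: closed0].
have [W' HW'] := choice W'ex.
pose Wn n := if @choice.unpickle (nat * nat)%type n is Some mk then W' mk else set0.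
have HWn n : clopen (Wn n) /\ indep (Wn n).
  rewrite /Wn; case: choice.unpickle => [mk|]; first by case: (HW' mk).
  by split; [split; [exact: open0|exact: closed0]| move=> x y _ []].
have cover z : exists n, Wn n z.
  have [e [ep He]] := Hz' z.
  have [V [Vc Vz sV]] := zd [set y | Rlt (d z y) e] z (@ball_open X d z e dm mt) (eq_ind_r (fun t => Rlt t e) ep (proj2 (dE z z) erefl)).
  have [r [rp Hr]] := (mt V).1 Vc.1 z Vz.
  have [N HN] := h_small (Rmult r (Rinv 2)) ltac:(lra).
  have hk := HN N (leqnn N).
  have hpos := h_pos N.
  have [q [Oq Dq]] : [set y | Rlt (d z y) (h N.+1)] `&` D !=set0.
    apply: Dd; last exact: (@ball_open X d z _ dm mt).
    exists z => /=; rewrite (proj2 (dE z z) erefl); exact: hpos.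
  have PmH : Pm (g q, N).
    exists q; split => //; exists V; split => //.
      by move=> x y Axy Vx Vy; apply: (He x y Axy (sV x Vx) (sV y Vy)).
    move=> y hy; apply: Hr; have := dt z q y; have : Rlt (d q y) (h N.+1) := hy.
    have : Rlt (d z q) (h N.+1) := Oq; lra.
  have [_ _ /(_ PmH) [q' [Dq' gq' sW]]] := HW' (g q, N).
  have qq : q' = q by apply: gi => //; rewrite inE.
  subst q'.
  exists (choice.pickle (g q, N)); rewrite /Wn choice.pickleK; apply: sW.
  by rewrite /bl /= ds.
have cover' z : exists n, `[< Wn n z >].
  by have [n Hn] := cover z; exists n; apply/asboolP.
pose c z := ex_minn (cover' z).
have cP z : Wn (c z) z /\ forall i, Wn i z -> (c z <= i)%N.
  rewrite /c; case: ex_minnP => n /asboolP Pn Hmin; split => // i Hi.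
  by apply: Hmin; apply/asboolP.
exists c; split; last first.
  move=> x y Axy cxy; have [cx _] := cP x; have [cy _] := cP y.
  have [_ ind] := HWn (c x); apply: (ind x y Axy cx); by rewrite cxy.
apply/continuousP => S _; rewrite openE => z Sz; rewrite /interior nbhsE.
exists (Wn (c z) `&` ~` (\big[setU/set0]_(i <- iota 0 (c z)) Wn i)).
  split.
    apply: openI; first exact: (HWn (c z)).1.1.
    rewrite openC; apply: closed_bigsetU => i _; exact: (HWn i).1.2.
  split; first exact: (cP z).1.
  move=> /bigsetU_mem [i []]; rewrite mem_iota add0n => /andP [_ ilt] Wi.
  by have := (cP z).2 i Wi; rewrite leqNgt ilt.
move=> y [Wy nW]; rewrite /preimage /=.
suff -> : c y = c z by [].
apply/eqP; rewrite eqn_leq; apply/andP; split; first exact: (cP y).2.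
rewrite leqNgt; apply/negP => lt; apply: nW; apply/bigsetU_mem.
by exists (c y); split; [rewrite mem_iota add0n|exact: (cP y).1].
Qed.

Lemma dir_ba (XX : topologicalType) (AA : set (XX * XX)) :
   (exists C : bool -> nat -> set XX,
       (forall e i, clopen (C e i)) /\
       (forall e i e' j, (e, i) <> (e', j) -> C e i `&` C e' j = set0) /\
       AA `<=` \bigcup_(i in [set: nat]) (C false i `*` C true i)) ->
  (forall (X : topologicalType) (A : set (X * X)),
       polish_space X -> zero_dim X ->
       ~ (exists c : X -> nat, continuous c /\
            (forall x y, A (x, y) -> c x <> c y)) ->
       exists f : XX -> X, continuous f /\
            (forall x y, AA (x, y) -> A (f x, f y))).
Proof.
move=> [C [Ccl [Cdis Ccov]]] X A [sep [d [dm mt dc]]] zd Hnc.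
have [z Hz] := @key X A d sep zd dm mt Hnc.
have dm' := dm; case: dm' => [d0 dE ds dt].
have Hn : forall n, exists p : X * X,
    A p /\ Rlt (d z p.1) (h n.+1) /\ Rlt (d z p.2) (h n.+1).
  move=> n; have [x [y [Axy [h1 h2]]]] := Hz _ (h_pos n); by exists (x, y).
have [xy Hxy] := choice Hn.
pose pt (e : bool) i := if e then (xy i).2 else (xy i).1.
have ptd e i : Rlt (d z (pt e i)) (h i.+1) by case: e; case: (Hxy i) => _ [].
have fex : forall p, exists v : X,
    (forall e i, C e i p -> v = pt e i) /\ ((forall e i, ~ C e i p) -> v = z).
  move=> p; case: (EM (exists e i, C e i p)) => [[e [i Cp]]|nC].
    exists (pt e i); split; last by move=> H; case: (H e i Cp).
    move=> e' i' Cp'; case: (eqVneq (e, i) (e', i')) => [[-> ->]//|ne].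
    have E := Cdis e i e' i' (elimN eqP ne).
    have : (C e i `&` C e' i') p by [].
    by rewrite E.
  exists z; split => // e i Cp; case: nC; by exists e, i.
have [f Hf] := choice fex.
exists f; split; last first.
  move=> x y /Ccov [i _ [Cx Cy]]; rewrite ((Hf x).1 _ _ Cx) ((Hf y).1 _ _ Cy) /pt /=.
  by have := (Hxy i).1; case: (xy i).
apply/continuousP => U Uo; rewrite openE => p Up; rewrite /interior nbhsE.
case: (EM (exists e i, C e i p)) => [[e [i Cp]]|nC].
  exists (C e i); first by split; [exact: (Ccl e i).1|].
  move=> q Cq; rewrite /preimage /= ((Hf q).1 _ _ Cq) -((Hf p).1 _ _ Cp); exact: Up.
have fpz : f p = z by apply: (Hf p).2 => e i Cp; apply: nC; exists e, i.
have Uz : U z by rewrite -fpz.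
have [r [rp Hr]] := (mt U).1 Uo z Uz.
have [N HN] := h_small r rp.
exists (~` (\big[setU/set0]_(i <- iota 0 N) (C false i `|` C true i))).
  split.
    rewrite openC; apply: closed_bigsetU => i _; apply: closedU;
      [exact: (Ccl false i).2|exact: (Ccl true i).2].
  move=> /bigsetU_mem [i [_ [Cp|Cp]]]; apply: nC; [exists false, i|exists true, i]; exact: Cp.
move=> q nq; rewrite /preimage /=.
case: (EM (exists e i, C e i q)) => [[e [i Cq]]|nCq].
  rewrite ((Hf q).1 _ _ Cq); apply: Hr.
  have iN : (N <= i)%N.
    rewrite leqNgt; apply/negP => iN; apply: nq; apply/bigsetU_mem; exists i; split.
      by rewrite mem_iota.
    by case: e Cq => Cq; [right|left].
  have := ptd e i; have := HN i iN; lra.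
rewrite (Hf q).2; last by move=> e i Cq; apply: nCq; exists e, i.
apply: Hr; rewrite (proj2 (dE z z) erefl); exact: rp.
Qed.

Theorem proposition3p5 (XX : topologicalType) (AA : set (XX * XX)) :
  polish_space XX -> zero_dim XX ->
  ((forall (X : topologicalType) (A : set (X * X)),
       polish_space X -> zero_dim X ->
       ~ (exists c : X -> nat, continuous c /\
            (forall x y, A (x, y) -> c x <> c y)) ->
       exists f : XX -> X, continuous f /\
            (forall x y, AA (x, y) -> A (f x, f y)))
   <->
   (exists C : bool -> nat -> set XX,
       (forall e i, clopen (C e i)) /\
       (forall e i e' j, (e, i) <> (e', j) -> C e i `&` C e' j = set0) /\
       AA `<=` \bigcup_(i in [set: nat]) (C false i `*` C true i))).
Proof. move=> _ _; split; [exact: dir_ab|exact: dir_ba]. Qed.
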